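(* Let $A=\mathbf a\cdot\boldsymbol\sigma$ and $B=\mathbf b\cdot\boldsymbol\sigma$ with $\mathbf a,\mathbf b\in\mathbb{C}^3$, and $q\in\mathbb R$. Then $$AB-qBA=(1-q)(\mathbf a\cdot\mathbf b)\,I+i(1+q)(\mathbf a\times\mathbf b)\cdot\boldsymbol\sigma,$$ $$\|AB-qBA\|_F^2=2\big((1-q)^2|\mathbf a\cdot\mathbf b|^2+(1+q)^2|\mathbf a\times\mathbf b|^2\big),$$ and $\|AB-qBA\|_F^2\le (1+q^2)\|A\|_F^2\|B\|_F^2$.
   Context: $\sigma_1,\sigma_2,\sigma_3$ are the Pauli matrices, $\mathbf r\cdot\boldsymbol\sigma=\sum_{i=1}^3 r_i\sigma_i$, $\mathbf a\cdot\mathbf b=\sum_i a_ib_i$ (bilinear, no conjugation), $\mathbf a\times\mathbf b$ is the (bilinear) cross product, $|\cdot|$ is the Hermitian norm on $\mathbb{C}^3$, $I$ is the $2\times2$ identity, and $\|X\|_F=\sqrt{\operatorname{tr}(XX^\dagger)}$ is the Frobenius norm. *)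

(* Defs.v *)
From HB Require Import structures.
From mathcomp Require Import all_boot all_order all_algebra.
From mathcomp Require Import complex.
Set Implicit Arguments. Unset Strict Implicit. Unset Printing Implicit Defensive.
Import Order.TTheory GRing.Theory Num.Theory.
Local Open Scope ring_scope.
Local Open Scope complex_scope.

Section Pauli.
Variable R : rcfType.
Local Notation C := R[i].

(* Pauli matrices sigma_1, sigma_2, sigma_3, indexed by 'I_3 (0,1,2). *)
Definition pauli (k : 'I_3) : 'M[C]_2 :=
  \matrix_(r < 2, c < 2)
    if val k == 0%N then (if r == c then 0 else 1)
    else if val k == 1%N then
      (if r == c then 0 else if val r == 0%N then - (Complex 0 1) else Complex 0 1)
    else (if r == c then (if val r == 0%N then 1 else -1) else 0).

Definition dot_sigma (v : 'I_3 -> C) : 'M[C]_2 :=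
  \sum_(k < 3) v k *: pauli k.

(* bilinear dot product (no conjugation) *)
Definition bdot (a b : 'I_3 -> C) : C := \sum_(k < 3) a k * b k.

Definition bcross (a b : 'I_3 -> C) : 'I_3 -> C :=
  fun k => let i0 := (0 : 'I_3) in let i1 := (1 : 'I_3) in let i2 := (2 : 'I_3) in
    if val k == 0%N then a i1 * b i2 - a i2 * b i1
    else if val k == 1%N then a i2 * b i0 - a i0 * b i2
    else a i0 * b i1 - a i1 * b i0.

Definition cabs (z : C) : R := ComplexField.Normc.normc z.

Definition hnorm (v : 'I_3 -> C) : R := Num.sqrt (\sum_(k < 3) cabs (v k) ^+ 2).

Definition adjmx (n : nat) (X : 'M[C]_n) : 'M[C]_n := map_mx conjc X^T.

(* Frobenius norm ||X||_F = sqrt(tr(X X^dagger)); tr(X X^dagger) is real >= 0,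
   so we take the square root of its real part. *)
Definition frob (n : nat) (X : 'M[C]_n) : R :=
  Num.sqrt (complex.Re (\tr (X *m adjmx X))).

End Pauli.

Definition iC (R : rcfType) : R[i] := Complex 0 1.

(* Main.v *)
Require Import Defs.
From HB Require Import structures.
From mathcomp Require Import all_boot all_order all_algebra.
From mathcomp Require Import complex ring lra.
Import Order.TTheory GRing.Theory Num.Theory.
Local Open Scope ring_scope.
Local Open Scope complex_scope.

Notation cRe := complex.Re.
Notation cIm := complex.Im.
Section S.
Variable R : rcfType.
Implicit Types z w : R[i].

Lemma sum3 (V : zmodType) (F : 'I_3 -> V) : \sum_(k < 3) F k = F 0 + F 1 + F 2.
Proof.
rewrite !big_ord_recr big_ord0 /= add0r.
by congr (F _ + F _ + F _); apply/val_inj.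
Qed.
Lemma sum2 (V : zmodType) (F : 'I_2 -> V) : \sum_(k < 2) F k = F 0 + F 1.
Proof.
rewrite !big_ord_recr big_ord0 /= add0r.
by congr (F _ + F _); apply/val_inj.
Qed.

Lemma cE z w : cRe z = cRe w -> cIm z = cIm w -> z = w.
Proof. by case: z w => [x y] [u v] /= -> ->. Qed.
Lemma ReD z w : cRe (z + w) = cRe z + cRe w. Proof. by case: z w => [x y] [u v]. Qed.
Lemma ImD z w : cIm (z + w) = cIm z + cIm w. Proof. by case: z w => [x y] [u v]. Qed.
Lemma ReN z : cRe (- z) = - cRe z. Proof. by case: z. Qed.
Lemma ImN z : cIm (- z) = - cIm z. Proof. by case: z. Qed.
Lemma ReM z w : cRe (z * w) = cRe z * cRe w - cIm z * cIm w. Proof. by case: z w => [x y] [u v]. Qed.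
Lemma ImM z w : cIm (z * w) = cRe z * cIm w + cIm z * cRe w. Proof. by case: z w => [x y] [u v]. Qed.
Lemma ReJ z : cRe (z^*) = cRe z. Proof. by case: z. Qed.
Lemma ImJ z : cIm (z^*) = - cIm z. Proof. by case: z. Qed.
Lemma ReC (x : R) : cRe (x%:C) = x. Proof. by []. Qed.
Lemma ImC (x : R) : cIm (x%:C) = 0. Proof. by []. Qed.
Lemma Re0 : cRe (0 : R[i]) = 0. Proof. by []. Qed.
Lemma Im0 : cIm (0 : R[i]) = 0. Proof. by []. Qed.
Lemma Re1 : cRe (1 : R[i]) = 1. Proof. by []. Qed.
Lemma Im1 : cIm (1 : R[i]) = 0. Proof. by []. Qed.
Lemma ReI (x y : R) : cRe (Complex x y) = x. Proof. by []. Qed.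
Lemma ImI (x y : R) : cIm (Complex x y) = y. Proof. by []. Qed.
Lemma ReZ (x : R[i]) (z : R[i]) : True. Proof. by []. Qed.

Lemma ord2 (i : 'I_2) : i = 0 \/ i = 1.
Proof. case: i => [[|[|n]] Hn]; [left|right|]; try by apply/val_inj. by []. Qed.

Ltac cpush := rewrite ?(ReD, ImD, ReN, ImN, ReM, ImM, ReC, ImC, Re0, Im0, Re1, Im1, ReI, ImI, ReJ, ImJ).

Lemma part1 (a b : 'I_3 -> R[i]) (q : R) :
  dot_sigma a *m dot_sigma b - q%:C *: (dot_sigma b *m dot_sigma a) =
  ((1 - q)%:C * bdot a b) *: 1%:M + (iC R * (1 + q)%:C) *: dot_sigma (bcross a b).
Proof.
apply/matrixP => i j.
rewrite /dot_sigma /pauli /bdot /bcross /iC.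
rewrite !mxE !sum2 !summxE !sum3 !mxE /=.
case: (a 0) => [x0 y0]; case: (a 1) => [x1 y1]; case: (a 2) => [x2 y2].
case: (b 0) => [u0 v0]; case: (b 1) => [u1 v1]; case: (b 2) => [u2 v2].
by case: (ord2 i) => ->; case: (ord2 j) => ->; apply: cE; simpl; ring.
Qed.
Definition n2 (z : R[i]) := cRe z ^+ 2 + cIm z ^+ 2.

Lemma n2_ge0 z : 0 <= n2 z.
Proof. by rewrite /n2 addr_ge0 // sqr_ge0. Qed.

Lemma cabs2 z : cabs z ^+ 2 = n2 z.
Proof. by case: z => x y; rewrite /cabs /n2 /= sqr_sqrtr // addr_ge0 // sqr_ge0. Qed.

Lemma hnorm2 (v : 'I_3 -> R[i]) : hnorm v ^+ 2 = n2 (v 0) + n2 (v 1) + n2 (v 2).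
Proof.
rewrite /hnorm sum3 !cabs2 sqr_sqrtr //.
by apply: addr_ge0; [apply: addr_ge0|]; apply: n2_ge0.
Qed.

Lemma trE (X : 'M[R[i]]_2) :
  complex.Re (\tr (X *m adjmx X)) = n2 (X 0 0) + n2 (X 0 1) + n2 (X 1 0) + n2 (X 1 1).
Proof.
rewrite /mxtrace /adjmx sum2 !mxE !sum2 !mxE /n2.
move: (X 0 0) (X 0 1) (X 1 0) (X 1 1) => [x0 y0] [x1 y1] [x2 y2] [x3 y3].
simpl; ring.
Qed.

Lemma frob2 (X : 'M[R[i]]_2) :
  frob X ^+ 2 = n2 (X 0 0) + n2 (X 0 1) + n2 (X 1 0) + n2 (X 1 1).
Proof.
rewrite /frob trE sqr_sqrtr //.
by apply: addr_ge0; [apply: addr_ge0; [apply: addr_ge0|]|]; apply: n2_ge0.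
Qed.

Lemma part2 (a b : 'I_3 -> R[i]) (q : R) :
  let M := ((1 - q)%:C * bdot a b) *: 1%:M + (iC R * (1 + q)%:C) *: dot_sigma (bcross a b) in
  frob M ^+ 2 = 2 * ((1 - q) ^+ 2 * cabs (bdot a b) ^+ 2
                         + (1 + q) ^+ 2 * hnorm (bcross a b) ^+ 2).
Proof.
move=> M; rewrite /M frob2 cabs2 hnorm2 /n2.
rewrite /dot_sigma /pauli /bdot /bcross /iC !mxE !summxE !sum3 !mxE /=.
case: (a 0) => [x0 y0]; case: (a 1) => [x1 y1]; case: (a 2) => [x2 y2].
case: (b 0) => [u0 v0]; case: (b 1) => [u1 v1]; case: (b 2) => [u2 v2].
simpl. ring.
Qed.

Lemma frobA (a : 'I_3 -> R[i]) : frob (dot_sigma a) ^+ 2 = 2 * (n2 (a 0) + n2 (a 1) + n2 (a 2)).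
Proof.
rewrite frob2 /n2 /dot_sigma /pauli !summxE !sum3 !mxE /=.
case: (a 0) => [x0 y0]; case: (a 1) => [x1 y1]; case: (a 2) => [x2 y2].
simpl; ring.
Qed.

Lemma ineq (a b : 'I_3 -> R[i]) (q : R) :
  2 * ((1 - q) ^+ 2 * n2 (bdot a b) + (1 + q) ^+ 2 * (n2 (bcross a b 0) + n2 (bcross a b 1) + n2 (bcross a b 2)))
  <= (1 + q ^+ 2) * (2 * (n2 (a 0) + n2 (a 1) + n2 (a 2))) * (2 * (n2 (b 0) + n2 (b 1) + n2 (b 2))).
Proof.
rewrite /n2 /bdot /bcross !sum3 /=.
case: (a 0) => [x0 y0]; case: (a 1) => [x1 y1]; case: (a 2) => [x2 y2].
case: (b 0) => [u0 v0]; case: (b 1) => [u1 v1]; case: (b 2) => [u2 v2].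
simpl; rewrite -subr_ge0.
rewrite (_ : _ - _ = 2 * ((1 - q) ^+ 2 * ((x0*u1 + y0*v1 - x1*u0 - y1*v0)^+2 + (y0*u1 - x0*v1 - y1*u0 + x1*v0)^+2 + (x0*u2 + y0*v2 - x2*u0 - y2*v0)^+2 + (y0*u2 - x0*v2 - y2*u0 + x2*v0)^+2 + (x1*u2 + y1*v2 - x2*u1 - y2*v1)^+2 + (y1*u2 - x1*v2 - y2*u1 + x2*v1)^+2) + (1 + q) ^+ 2 * ((x0*u0 + y0*v0 + x1*u1 + y1*v1 + x2*u2 + y2*v2)^+2 + (y0*u0 - x0*v0 + y1*u1 - x1*v1 + y2*u2 - x2*v2)^+2))); last by ring.
apply: mulr_ge0 => //; apply: addr_ge0; apply: mulr_ge0; rewrite ?sqr_ge0 //;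
  by repeat apply: addr_ge0; apply: sqr_ge0.
Qed.

End S.

Theorem mainTheorem7 (R : rcfType) (a b : 'I_3 -> R[i]) (q : R) :
  let A := dot_sigma a in
  let B := dot_sigma b in
  let M := A *m B - q%:C *: (B *m A) in
  [/\ M = ((1 - q)%:C * bdot a b) *: 1%:M
          + (iC R * (1 + q)%:C) *: dot_sigma (bcross a b),
      frob M ^+ 2 = 2 * ((1 - q) ^+ 2 * cabs (bdot a b) ^+ 2
                         + (1 + q) ^+ 2 * hnorm (bcross a b) ^+ 2)
    & frob M ^+ 2 <= (1 + q ^+ 2) * frob A ^+ 2 * frob B ^+ 2].
Proof.
move=> A B M.
have E1 : M = ((1 - q)%:C * bdot a b) *: 1%:M
          + (iC R * (1 + q)%:C) *: dot_sigma (bcross a b) := @part1 R a b q.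
have P2 := @part2 R a b q; simpl in P2.
split => //; first by rewrite E1 P2.
rewrite E1 P2 cabs2 hnorm2 /A /B !frobA; exact: ineq.
Qed.
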